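(* Let $\alpha\in(0,1)$, $\tau>0$, $t_m=m\tau$, and let $v=(v^0,v^1,v^2,\dots)$ be any sequence of real numbers. Define $$a_0^{(\alpha)}=\frac{1}{\Gamma(2-\alpha)},\qquad a_k^{(\alpha)}=\frac{1}{\Gamma(2-\alpha)}\big[(k+1)^{1-\alpha}-k^{1-\alpha}\big],\ k\ge1,$$ and, for $n\ge1$, $$\delta_t^{\alpha}v^n=\frac{1}{\tau^{\alpha}}\Big[a_0^{(\alpha)}v^n-\sum_{k=1}^{n-1}\big(a_{n-k-1}^{(\alpha)}-a_{n-k}^{(\alpha)}\big)v^k-a_{n-1}^{(\alpha)}v^0\Big].$$ Then for every integer $m\ge1$, $$\tau\sum_{n=1}^{m}v^n\,\delta_t^{\alpha}v^n\ \ge\ \frac12\,\tau^{1-\alpha}\sum_{n=1}^{m}a_{m-n}^{(\alpha)}(v^n)^2-\frac{t_m^{1-\alpha}}{2\Gamma(2-\alpha)}(v^0)^2 .$$ *)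

(* Defs.v *)
From Stdlib Require Import Reals.
From Coquelicot Require Import Coquelicot.
Open Scope R_scope.

Definition Gamma (s : R) : R :=
  RInt_gen (fun t => Rpower t (s - 1) * exp (- t))
           (at_right 0) (Rbar_locally p_infty).

Definition acoef (alpha : R) (k : nat) : R :=
  match k with
  | O => / Gamma (2 - alpha)
  | S _ => / Gamma (2 - alpha) *
           (Rpower (INR k + 1) (1 - alpha) - Rpower (INR k) (1 - alpha))
  end.

(* L1 discrete Caputo derivative delta_t^alpha v^n, for n >= 1.
   sum_n_m f 1 (n-1) is the (possibly empty) sum over k = 1..n-1. *)
Definition L1deriv (alpha tau : R) (v : nat -> R) (n : nat) : R :=
  / Rpower tau alpha *
  (acoef alpha 0 * v n
   - sum_n_m (fun k => (acoef alpha (n - k - 1) - acoef alpha (n - k)) * v k) 1 (n - 1)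
   - acoef alpha (n - 1) * v O).

(* Main.v *)
Require Import Defs.
From Stdlib Require Import Reals Lra Lia Arith.
From Coquelicot Require Import Coquelicot.
Open Scope R_scope.

Section G.
Variable b : R.
Hypothesis Hb : 0 < b < 1.
Let f := fun t => Rpower t b * exp (- t).

Lemma f_ex_derive t : 0 < t -> ex_derive f t.
Proof.
  intros Ht. unfold f. apply ex_derive_mult.
  - exists (b * Rpower t (b - 1)). apply is_derive_Reals. now apply derivable_pt_lim_power.
  - auto_derive. auto.
Qed.

Lemma f_cont t : 0 < t -> continuous f t.
Proof. intros Ht; exact (ex_derive_continuous f t (f_ex_derive t Ht)). Qed.

Lemma f_ex x y : 0 < x -> 0 < y -> ex_RInt f x y.
Proof.
  intros. apply (@ex_RInt_continuous R_CompleteNormedModule). intros z Hz. apply f_cont.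
  destruct Hz as [Hz _]. eapply Rlt_le_trans; [|exact Hz].
  unfold Rmin; destruct Rle_dec; lra.
Qed.

Lemma f_pos t : 0 < t -> 0 <= f t.
Proof.
  intros. unfold f. apply Rmult_le_pos.
  unfold Rpower; left; apply exp_pos. left; apply exp_pos.
Qed.

Lemma Rpower_le_1t t : 0 < t -> Rpower t b <= 1 + t.
Proof.
  intros Ht. destruct (Rle_dec t 1).
  - assert (Rpower t b <= Rpower 1 b) by (apply Rle_Rpower_l; lra).
    unfold Rpower at 2 in H. rewrite ln_1, Rmult_0_r, exp_0 in H. lra.
  - assert (Rpower t b <= Rpower t 1) by (apply Rle_Rpower; lra).
    rewrite Rpower_1 in H; lra.
Qed.

Let g := fun t => 3 * exp (- t / 2).
Let H := fun t => 6 * exp (- t / 2).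

Lemma f_le_g t : 0 < t -> f t <= g t.
Proof.
  intros Ht. unfold f, g.
  assert (E : exp (- t) = exp (- t / 2) * exp (- t / 2)).
  { rewrite <- exp_plus. f_equal. lra. }
  rewrite E.
  assert (1 + t / 2 < exp (t / 2)) by (apply exp_ineq1; lra).
  assert (exp (t/2) * exp (-t/2) = 1).
  { rewrite <- exp_plus. replace (t/2 + - t/2) with 0 by lra. apply exp_0. }
  pose proof (exp_pos (-t/2)). pose proof (Rpower_le_1t t Ht).
  assert (Rpower t b * exp (-t/2) <= 3) by nra.
  nra.
Qed.

Lemma g_int x y : is_RInt g x y (H x - H y).
Proof.
  replace (H x - H y) with (minus ((fun t => - H t) y) ((fun t => - H t) x))
    by (unfold minus, plus, opp; simpl; ring).
  apply (@is_RInt_derive R_CompleteNormedModule (fun t => - H t)).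
  - intros z _. unfold H, g. auto_derive. auto. unfold Rdiv; field.
  - intros z _. unfold g. apply (ex_derive_continuous (V:=R_NormedModule)). auto_derive. auto.
Qed.

Lemma F_bounds x y : 0 < x -> x <= y -> 0 <= RInt f x y <= H x - H y.
Proof.
  intros Hx Hxy. split.
  - apply RInt_ge_0; auto. apply f_ex; lra. intros; apply f_pos; lra.
  - rewrite <- (is_RInt_unique _ _ _ _ (g_int x y)).
    apply RInt_le; auto. apply f_ex; lra. eexists; apply g_int.
    intros; apply f_le_g; lra.
Qed.


Let FP := filter_prod (at_right 0) (Rbar_locally p_infty).

Lemma ev d M : 0 < d -> FP (fun ab => 0 < fst ab < d /\ M < snd ab).
Proof.
  intros Hd. apply (Filter_prod _ _ _ (fun x => 0 < x < d) (fun y => M < y)).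
  - exists (mkposreal d Hd). intros y Hy Hy0. simpl.
    unfold ball in Hy; simpl in Hy; unfold AbsRing_ball, abs, minus, plus, opp in Hy; simpl in Hy.
    apply Rabs_def2 in Hy. lra.
  - exists M. auto.
  - intros x y Hx Hy. simpl. auto.
Qed.

Lemma H_le1 x : 0 <= x -> H x <= 6.
Proof.
  intros. unfold H. destruct (Req_dec x 0). subst. replace (-0/2) with 0 by field. rewrite exp_0; lra.
  assert (exp (-x/2) < 1). { rewrite <- exp_0. apply exp_increasing. lra. } lra.
Qed.

Lemma H_pos x : 0 < H x.
Proof. unfold H. pose proof (exp_pos (-x/2)). lra. Qed.

Lemma split3 d M a b' : 0 < a -> 0 < d -> 0 < M -> 0 < b' ->
  RInt f a b' = RInt f a d + RInt f d M + RInt f M b'.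
Proof.
  intros.
  rewrite <- (RInt_Chasles f a M b') by (apply f_ex; lra).
  rewrite <- (RInt_Chasles f a d M) by (apply f_ex; lra).
  reflexivity.
Qed.

Lemma cauchy_F : exists y, filterlim (fun ab => RInt f (fst ab) (snd ab)) FP (locally y).
Proof.
  apply (filterlim_locally_cauchy (U := R_CompleteSpace)).
  intros [eps Heps]. simpl.
  set (d := Rmin (1/2) (eps/8)).
  assert (Hd : 0 < d) by (unfold d, Rmin; destruct Rle_dec; lra).
  assert (Hd1 : d <= 1/2) by (unfold d; apply Rmin_l).
  assert (Hd2 : d <= eps/8) by (unfold d; apply Rmin_r).
  set (M := 1 + 24 / eps).
  assert (HM : 1 < M) by (unfold M; assert (0 < 24/eps) by (apply Rdiv_lt_0_compat; lra); lra).
  exists (fun ab => 0 < fst ab < d /\ M < snd ab). split. apply ev; auto.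
  intros [a b'] [a2 b2] [[Ha1 Ha2] Hb3] [[Hc1 Hc2] Hc]. simpl in *.
  unfold ball; simpl; unfold AbsRing_ball, abs, minus, plus, opp; simpl.
  rewrite (split3 d M a b'), (split3 d M a2 b2) by lra.
  destruct (F_bounds a d) as [A1 A2]; try lra.
  destruct (F_bounds a2 d) as [B1 B2]; try lra.
  destruct (F_bounds M b') as [C1 C2]; try lra.
  destruct (F_bounds M b2) as [D1 D2]; try lra.
  pose proof (H_le1 a) as Ea. pose proof (H_le1 a2) as Ea2.
  pose proof (H_pos b') as Pb. pose proof (H_pos b2) as Pb2.
  assert (Hdel : 6 - H d <= 3 * d).
  { unfold H. assert (1 + (-d/2) < exp (-d/2)) by (apply exp_ineq1; lra). lra. }
  assert (HMb : H M < eps / 2).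
  { unfold H. assert (1 + M/2 < exp (M/2)) by (apply exp_ineq1; lra).
    assert (exp (M/2) * exp (-M/2) = 1).
    { rewrite <- exp_plus. replace (M/2 + - M/2) with 0 by lra. apply exp_0. }
    pose proof (exp_pos (-M/2)).
    assert (M * eps = eps + 24) by (unfold M; field; lra).
    nra. }
  apply Rabs_def1; lra.
Qed.

Lemma Gamma_gen_pos : 0 < RInt_gen f (at_right 0) (Rbar_locally p_infty).
Proof.
  destruct cauchy_F as [y Hy].
  assert (HI : is_RInt_gen f (at_right 0) (Rbar_locally p_infty) y).
  { unfold is_RInt_gen, filterlimi, filter_le, filtermapi. intros P HP.
    assert (Hy' : FP (fun ab => P (RInt f (fst ab) (snd ab)))) by exact (Hy P HP).
    generalize (filter_and _ _ Hy' (ev 1 0 Rlt_0_1)).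
    apply filter_imp. intros [a b'] [H1 [[H2 _] H3]]. simpl in *.
    exists (RInt f a b'). split; auto. apply (RInt_correct (V:=R_CompleteNormedModule)). apply f_ex; lra. }
  rewrite (is_RInt_gen_unique f y HI).
  assert (Hc : 0 < RInt f 1 2).
  { apply RInt_gt_0. lra. intros; unfold f. apply Rmult_lt_0_compat; unfold Rpower; apply exp_pos.
    intros; apply f_cont; lra. }
  destruct (Rlt_or_le y (RInt f 1 2)) as [Hlt|Hle]; [|lra].
  exfalso.
  assert (L : locally y (fun u => u < RInt f 1 2)) by (apply open_lt; auto).
  assert (Hy' : FP (fun ab => RInt f (fst ab) (snd ab) < RInt f 1 2)) by exact (Hy _ L).
  destruct (filter_ex _ (filter_and _ _ Hy' (ev 1 2 Rlt_0_1))) as [[a b'] [K1 [[K2 K3] K4]]].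
  simpl in *.
  rewrite (split3 1 2 a b') in K1 by lra.
  destruct (F_bounds a 1); try lra. destruct (F_bounds 2 b'); try lra.
Qed.

End G.

Lemma sumR_plus (f g : nat -> R) n m :
  sum_n_m (fun k => f k + g k) n m = sum_n_m f n m + sum_n_m g n m.
Proof. exact (sum_n_m_plus (G:=R_AbelianMonoid) f g n m). Qed.

Lemma sumR_scal c (f : nat -> R) n m :
  sum_n_m (fun k => c * f k) n m = c * sum_n_m f n m.
Proof. exact (sum_n_m_mult_l (K:=R_Ring) c f n m). Qed.

Lemma sumR_ext (f g : nat -> R) n m :
  (forall k, f k = g k) -> sum_n_m f n m = sum_n_m g n m.
Proof. intros H. apply sum_n_m_ext. exact H. Qed.

Lemma sumR_ext_loc (f g : nat -> R) n m :
  (forall k, (n <= k <= m)%nat -> f k = g k) -> sum_n_m f n m = sum_n_m g n m.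
Proof. intros H. apply sum_n_m_ext_loc. exact H. Qed.

Lemma sumR_le_loc (f g : nat -> R) n m :
  (forall k, (n <= k <= m)%nat -> f k <= g k) -> sum_n_m f n m <= sum_n_m g n m.
Proof.
  induction m; intros H.
  - destruct n. rewrite !sum_n_n. apply H; lia.
    rewrite !sum_n_m_zero by lia. apply Rle_refl.
  - destruct (le_lt_dec n (S m)).
    + rewrite !sum_n_Sm by lia.
      change (sum_n_m f n m + f (S m) <= sum_n_m g n m + g (S m)).
      destruct (le_lt_dec n m).
      * assert (sum_n_m f n m <= sum_n_m g n m) by (apply IHm; intros; apply H; lia).
        assert (f (S m) <= g (S m)) by (apply H; lia). lra.
      * rewrite !sum_n_m_zero by lia. change (0 + f (S m) <= 0 + g (S m)).
        assert (f (S m) <= g (S m)) by (apply H; lia). lra.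
    + rewrite !sum_n_m_zero by lia. apply Rle_refl.
Qed.

Lemma sumR_zero n m : sum_n_m (fun _ => 0) n m = 0.
Proof.
  induction m.
  - destruct n. rewrite sum_n_n; reflexivity. rewrite sum_n_m_zero by lia; reflexivity.
  - destruct (le_lt_dec n (S m)).
    + rewrite sum_n_Sm by lia. destruct (le_lt_dec n m).
      * rewrite IHm. change (0 + 0 = 0). ring.
      * rewrite sum_n_m_zero by lia. change (0 + 0 = 0). ring.
    + rewrite sum_n_m_zero by lia; reflexivity.
Qed.

Lemma sumR_nonneg (f : nat -> R) n m :
  (forall k, (n <= k <= m)%nat -> 0 <= f k) -> 0 <= sum_n_m f n m.
Proof.
  intros H. rewrite <- (sumR_zero n m). apply sumR_le_loc. auto.
Qed.

Section Alg.
Variable a v : nat -> R.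
Hypothesis Ha : forall k, 0 <= a k.
Hypothesis Hd : forall j, (1 <= j)%nat -> a j <= a (j - 1).

Lemma tele N : sum_n_m (fun k => a (S N - k - 1) - a (S N - k)) 1 N = a 0%nat - a N.
Proof.
  induction N.
  - rewrite sum_n_m_zero by lia. simpl. change (0 = a 0%nat - a 0%nat). ring.
  - rewrite sum_Sn_m by lia.
    rewrite <- sum_n_m_S.
    rewrite (sum_n_m_ext (fun n0 => a (S (S N) - S n0 - 1) - a (S (S N) - S n0))
                         (fun k => a (S N - k - 1) - a (S N - k))) by (intros; reflexivity).
    rewrite IHN. change (a (S (S N) - 1 - 1)%nat - a (S (S N) - 1)%nat + (a 0%nat - a N) = a 0%nat - a (S N)).
    replace (S (S N) - 1 - 1)%nat with N by lia. replace (S (S N) - 1)%nat with (S N) by lia. ring.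
Qed.

Lemma row n : (1 <= n)%nat ->
  v n * (a 0%nat * v n - sum_n_m (fun k => (a (n-k-1) - a (n-k)) * v k) 1 (n-1) - a (n-1)%nat * v 0%nat)
  >= /2 * (a 0%nat * v n ^ 2 - sum_n_m (fun k => (a (n-k-1) - a (n-k)) * v k ^ 2) 1 (n-1))
     - /2 * a (n-1)%nat * v 0%nat ^ 2.
Proof.
  intros Hn.
  set (d := fun k => a (n-k-1) - a (n-k)).
  assert (S1 : sum_n_m d 1 (n-1) = a 0%nat - a (n-1)%nat).
  { destruct n as [|N]; [lia|]. unfold d. replace (S N - 1)%nat with N by lia. apply tele. }
  assert (NN : 0 <= sum_n_m (fun k => d k * (v n - v k) ^ 2) 1 (n-1)).
  { apply sumR_nonneg. intros k Hk. apply Rmult_le_pos; [|apply pow2_ge_0].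
    unfold d. assert (a (n - k) <= a (n - k - 1)) by (apply Hd; lia). lra. }
  rewrite (sumR_ext (fun k => d k * (v n - v k) ^ 2)
     (fun k => (v n ^ 2 * d k + (-2 * v n) * (d k * v k)) + 1 * (d k * v k ^ 2))) in NN
     by (intros; ring).
  rewrite sumR_plus, sumR_plus, !sumR_scal, S1 in NN.
  change (fun k => (a (n-k-1) - a (n-k)) * v k) with (fun k => d k * v k).
  change (fun k => (a (n-k-1) - a (n-k)) * v k ^ 2) with (fun k => d k * v k ^ 2).
  set (Sv := sum_n_m (fun k => d k * v k) 1 (n-1)) in *.
  set (Sq := sum_n_m (fun k => d k * v k ^ 2) 1 (n-1)) in *.
  assert (0 <= a (n-1)%nat * (v n - v 0%nat) ^ 2) by (apply Rmult_le_pos; [apply Ha|apply pow2_ge_0]).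
  set (A0 := a 0%nat) in *. set (A1 := a (n-1)%nat) in *.
  match goal with |- ?L >= ?R =>
    assert (E : L - R = /2 * (v n ^ 2 * (A0 - A1) + -2 * v n * Sv + 1 * Sq) + /2 * (A1 * (v n - v 0%nat) ^ 2)) by (unfold Rdiv; field) end.
  lra.
Qed.

Lemma Qid m :
  sum_n_m (fun n => a 0%nat * v n ^ 2 - sum_n_m (fun k => (a (n-k-1) - a (n-k)) * v k ^ 2) 1 (n-1)) 1 m
  = sum_n_m (fun n => a (m - n)%nat * v n ^ 2) 1 m.
Proof.
  induction m.
  - rewrite !sum_n_m_zero by lia. reflexivity.
  - rewrite !sum_n_Sm by lia.
    destruct m as [|m'].
    + rewrite !sum_n_m_zero by lia.
      change (0 + (a 0%nat * v 1%nat ^ 2 - 0) = 0 + a 0%nat * v 1%nat ^ 2). ring.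
    + rewrite IHm.
      replace (S (S m') - 1)%nat with (S m') by lia.
      replace (S (S m') - S (S m'))%nat with 0%nat by lia.
      rewrite (sumR_ext (fun n => a (S (S m') - n)%nat * v n ^ 2)
        (fun n => a (S m' - n)%nat * v n ^ 2 + (-1) * ((a (S (S m') - n - 1) - a (S (S m') - n)) * v n ^ 2))).
      2:{ intros k. replace (S (S m') - k - 1)%nat with (S m' - k)%nat by lia. ring. }
      rewrite sumR_plus, sumR_scal.
      change (sum_n_m (fun n : nat => a (S m' - n)%nat * v n ^ 2) 1 (S m') +
        (a 0%nat * v (S (S m')) ^ 2 - sum_n_m (fun k => (a (S (S m') - k - 1) - a (S (S m') - k)) * v k ^ 2) 1 (S m'))
        = sum_n_m (fun n : nat => a (S m' - n)%nat * v n ^ 2) 1 (S m') +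
          -1 * sum_n_m (fun n => (a (S (S m') - n - 1) - a (S (S m') - n)) * v n ^ 2) 1 (S m')
          + a 0%nat * v (S (S m')) ^ 2).
      ring.
Qed.

Lemma main_alg m : (1 <= m)%nat ->
  sum_n_m (fun n => v n * (a 0%nat * v n - sum_n_m (fun k => (a (n-k-1) - a (n-k)) * v k) 1 (n-1) - a (n-1)%nat * v 0%nat)) 1 m
  >= /2 * sum_n_m (fun n => a (m - n)%nat * v n ^ 2) 1 m - /2 * sum_n_m (fun n => a (n - 1)%nat) 1 m * v 0%nat ^ 2.
Proof.
  intros Hm. apply Rle_ge.
  rewrite <- Qid.
  eapply Rle_trans; [|apply sumR_le_loc; intros k Hk; apply Rge_le, row; lia].
  rewrite (sumR_ext (fun n => /2 * (a 0%nat * v n ^ 2 - sum_n_m (fun k => (a (n-k-1) - a (n-k)) * v k ^ 2) 1 (n-1))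
     - /2 * a (n-1)%nat * v 0%nat ^ 2) (fun n => /2 * (a 0%nat * v n ^ 2 - sum_n_m (fun k => (a (n-k-1) - a (n-k)) * v k ^ 2) 1 (n-1))
       + (- /2 * v 0%nat ^ 2) * a (n-1)%nat)) by (intros; ring).
  rewrite sumR_plus, !sumR_scal. right; ring.
Qed.

End Alg.

Lemma P_mvt x y b : 0 < x -> x < y -> 0 < b < 1 ->
  exists c, x <= c <= y /\ Rpower y b - Rpower x b = b * Rpower c (b - 1) * (y - x).
Proof.
  intros Hx Hxy Hb.
  destruct (MVT_gen (fun t => Rpower t b) x y (fun t => b * Rpower t (b - 1))) as [c [Hc E]].
  - intros t Ht. rewrite Rmin_left, Rmax_right in Ht by lra.
    apply is_derive_Reals. apply derivable_pt_lim_power. lra.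
  - intros t Ht. rewrite Rmin_left, Rmax_right in Ht by lra.
    apply derivable_continuous_pt. exists (b * Rpower t (b - 1)).
    apply derivable_pt_lim_power. lra.
  - rewrite Rmin_left, Rmax_right in Hc by lra. exists c. split; auto.
Qed.

Lemma concave x b : 1 <= x -> 0 < b < 1 ->
  Rpower (x + 2) b - Rpower (x + 1) b <= Rpower (x + 1) b - Rpower x b.
Proof.
  intros Hx Hb.
  destruct (P_mvt x (x+1) b) as [c1 [H1 E1]]; try lra.
  destruct (P_mvt (x+1) (x+2) b) as [c2 [H2 E2]]; try lra.
  rewrite E1, E2.
  assert (Rpower c2 (b - 1) <= Rpower c1 (b - 1)).
  { replace (b - 1) with (- (1 - b)) by ring. rewrite !Rpower_Ropp.
    apply Rinv_le_contravar. unfold Rpower; apply exp_pos.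
    apply Rle_Rpower_l; lra. }
  nra.
Qed.

Lemma Rpower_1_l y : Rpower 1 y = 1.
Proof. unfold Rpower. rewrite ln_1, Rmult_0_r. apply exp_0. Qed.

Lemma acoef_nonneg alpha k : 0 < alpha < 1 -> 0 < / Gamma (2 - alpha) -> 0 <= acoef alpha k.
Proof.
  intros Ha Hc. destruct k as [|k].
  change (acoef alpha 0) with (/ Gamma (2 - alpha)). lra.
  change (acoef alpha (S k)) with (/ Gamma (2-alpha) * (Rpower (INR (S k) + 1) (1-alpha) - Rpower (INR (S k)) (1-alpha))).
  apply Rmult_le_pos; [lra|].
  assert (0 < INR (S k)) by (apply lt_0_INR; lia).
  assert (Rpower (INR (S k)) (1 - alpha) <= Rpower (INR (S k) + 1) (1 - alpha)) by (apply Rle_Rpower_l; lra).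
  lra.
Qed.

Lemma acoef_decr alpha j : 0 < alpha < 1 -> 0 < / Gamma (2 - alpha) -> (1 <= j)%nat ->
  acoef alpha j <= acoef alpha (j - 1).
Proof.
  intros Ha Hc Hj. destruct j as [|j]; [lia|].
  replace (S j - 1)%nat with j by lia.
  destruct j as [|k].
  - change (/ Gamma (2-alpha) * (Rpower (INR 1 + 1) (1-alpha) - Rpower (INR 1) (1-alpha)) <= / Gamma (2 - alpha)).
    change (INR 1) with 1. rewrite Rpower_1_l.
    replace (1+1) with 2 by ring.
    assert (Rpower 2 (1 - alpha) <= Rpower 2 1) by (apply Rle_Rpower; lra).
    rewrite Rpower_1 in H by lra.
    assert (Rpower 2 (1 - alpha) - 1 <= 1) by lra.
    rewrite <- (Rmult_1_r (/ Gamma (2 - alpha))) at 2.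
    apply Rmult_le_compat_l; lra.
  - change (/ Gamma (2-alpha) * (Rpower (INR (S (S k)) + 1) (1-alpha) - Rpower (INR (S (S k))) (1-alpha))
      <= / Gamma (2-alpha) * (Rpower (INR (S k) + 1) (1-alpha) - Rpower (INR (S k)) (1-alpha))).
    rewrite (S_INR (S k)).
    assert (1 <= INR (S k)) by (rewrite S_INR; pose proof (pos_INR k); lra).
    pose proof (concave (INR (S k)) (1 - alpha) H ltac:(lra)).
    replace (INR (S k) + 1 + 1) with (INR (S k) + 2) by ring.
    apply Rmult_le_compat_l; lra.
Qed.

Lemma acoef_sum alpha m : (1 <= m)%nat ->
  sum_n_m (fun n => acoef alpha (n - 1)) 1 m = / Gamma (2 - alpha) * Rpower (INR m) (1 - alpha).
Proof.
  intros Hm. destruct m as [|m']; [lia|]. clear Hm.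
  induction m'.
  - rewrite sum_n_n. simpl. rewrite Rpower_1_l. ring.
  - rewrite sum_n_Sm by lia. rewrite IHm'.
    replace (S (S m') - 1)%nat with (S m') by lia.
    change (/ Gamma (2 - alpha) * Rpower (INR (S m')) (1 - alpha) +
      / Gamma (2 - alpha) * (Rpower (INR (S m') + 1) (1 - alpha) - Rpower (INR (S m')) (1 - alpha))
      = / Gamma (2 - alpha) * Rpower (INR (S (S m'))) (1 - alpha)).
    rewrite (S_INR (S m')). ring.
Qed.

Theorem lemma7 (alpha tau : R) (v : nat -> R) (m : nat)
  (Halpha : 0 < alpha < 1) (Htau : 0 < tau) (Hm : (1 <= m)%nat) :
  tau * sum_n_m (fun n => v n * L1deriv alpha tau v n) 1 m >=
  / 2 * Rpower tau (1 - alpha) *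
    sum_n_m (fun n => acoef alpha (m - n) * (v n) ^ 2) 1 m
  - Rpower (INR m * tau) (1 - alpha) / (2 * Gamma (2 - alpha)) * (v O) ^ 2.
Proof.
  assert (HG : 0 < Gamma (2 - alpha)).
  { unfold Gamma. apply (Gamma_gen_pos (2 - alpha - 1)). lra. }
  assert (Hc : 0 < / Gamma (2 - alpha)) by (apply Rinv_0_lt_compat; auto).
  pose proof (main_alg (acoef alpha) v (fun k => acoef_nonneg alpha k Halpha Hc)
                (fun j Hj => acoef_decr alpha j Halpha Hc Hj) m Hm) as MA.
  rewrite acoef_sum in MA by auto.
  replace (sum_n_m (fun n => v n * L1deriv alpha tau v n) 1 m) with
    (/ Rpower tau alpha * sum_n_m (fun n => v n * (acoef alpha 0 * v n - sum_n_m (fun k => (acoef alpha (n - k - 1) - acoef alpha (n - k)) * v k) 1 (n - 1) - acoef alpha (n - 1) * v O)) 1 m)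
    by (rewrite <- sumR_scal; apply sumR_ext; intros; unfold L1deriv; ring).
  assert (ET : tau * / Rpower tau alpha = Rpower tau (1 - alpha)).
  { unfold Rminus. rewrite Rpower_plus, Rpower_1 by auto. rewrite Rpower_Ropp. reflexivity. }
  assert (EM : Rpower (INR m * tau) (1 - alpha) = Rpower (INR m) (1 - alpha) * Rpower tau (1 - alpha)).
  { rewrite Rpower_mult_distr; auto. apply lt_0_INR; lia. }
  rewrite <- Rmult_assoc, ET, EM.
  assert (HT : 0 < Rpower tau (1 - alpha)) by (unfold Rpower; apply exp_pos).
  set (T := Rpower tau (1 - alpha)) in *.
  set (S := sum_n_m _ 1 m) in MA |- *.
  set (A := sum_n_m (fun n => acoef alpha (m - n) * v n ^ 2) 1 m) in *.
  set (PM := Rpower (INR m) (1 - alpha)) in *.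
  set (c := / Gamma (2 - alpha)) in *.
  assert (E2 : PM * T / (2 * Gamma (2 - alpha)) = /2 * T * (c * PM)).
  { unfold c, Rdiv. rewrite Rinv_mult. ring. }
  rewrite E2.
  apply Rle_ge. apply Rge_le in MA.
  replace (/ 2 * T * A - / 2 * T * (c * PM) * v 0%nat ^ 2) with (T * (/ 2 * A - / 2 * (c * PM) * v 0%nat ^ 2)) by ring.
  apply Rmult_le_compat_l; lra.
Qed.
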